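(* Let $M(x,y)=M(q,\nu,t,w,1;x,y)$ and define the kernel $$K(x,y)=1-\frac{x^2ywt(\nu-1)}{x-1}-\frac{xy^2t}{y-1}-xyt(x\nu-1)M(x,1)-xywt\big((\nu-1)(y-1)+qy\big)M(1,y).$$ Set $x=1+ts$, where $s$ is a new indeterminate. Then there are exactly two series $Y$ in $\mathbb{Q}(q,\nu,w,s)[[t]]$ satisfying $K(1+ts,Y)=0$; denote them $Y_1,Y_2$. Their constant terms are $1$ and $\frac{s}{w(\nu-1)}$ respectively, and the coefficient of $t$ in $Y_1$ is $\frac{s}{w-w\nu+s}$ (in particular it is non-zero).
   Context: A planar map is a proper embedding of a connected planar graph (loops and multiple edges allowed) in the oriented sphere, up to orientation-preserving homeomorphism; it is rooted by distinguishing a corner (sector between consecutive edges around a vertex), whose vertex and face are the root-vertex and root-face; degrees are counted with multiplicity; the atomic map (one vertex, no edge) is included. $e(M),v(M),f(M)$ are numbers of edges, vertices, faces; $d_v(M),d_f(M)$ the degrees of root-vertex and root-face. The Potts polynomial of a graph $G$ is $P_G(q,\nu)=\sum_{c:V(G)\to\{1,\dots,q\}}\nu^{m(c)}$, $m(c)$ = number of monochromatic edges (loops always monochromatic), regarded as a polynomial in $q,\nu$ (divisible by $q$). $M(q,\nu,t,w,z;x,y)=\frac1q\sum_{M}t^{e(M)}w^{v(M)-1}z^{f(M)-1}x^{d_v(M)}y^{d_f(M)}P_M(q,\nu)$ summed over rooted planar maps, a series in $t$ with coefficients in $\mathbb{Q}[q,\nu,w,z,x,y]$. *)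

(* Defs.v *)
From HB Require Import structures.
From mathcomp Require Import all_boot all_order all_fingroup all_algebra.
From Stdlib Require Import ClassicalEpsilon.
Set Implicit Arguments. Unset Strict Implicit. Unset Printing Implicit Defensive.
Import Order.TTheory GRing.Theory Num.Theory.
Local Open Scope ring_scope.

(* Tower of polynomial rings: PQ = Q[q], PN = Q[q][nu], PW = ..[w],   *)
(* PS = ..[s]; F is the fraction field of PS.                          *)
Definition PQ := {poly rat}.
Definition PN := {poly PQ}.
Definition PW := {poly PN}.
Definition PS := {poly PW}.
Definition F := {fraction PS}.

Definition sF : F := tofrac ('X : PS).
Definition wF : F := tofrac (('X : PW)%:P : PS).
Definition nuF : F := tofrac ((('X : PN)%:P : PW)%:P : PS).
Definition qF : F := tofrac (((('X : PQ)%:P : PN)%:P : PW)%:P : PS).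
(* embedding of a polynomial in (q, nu) (outer variable nu, inner q) *)
Definition embQN (p : PN) : F := tofrac ((p%:P : PW)%:P : PS).

(* Combinatorial maps with n.+1 edges.  Half-edges: pairs (j, b), edge *)
(* j : 'I_n.+1; alpha (j,b) = (j, ~~ b) is the fixed edge involution;  *)
(* sigma (a permutation) gives the cyclic order around vertices;       *)
(* faces are the cycles of phi = sigma o alpha.  The root corner is    *)
(* the one at half-edge (0,false).                                     *)
Definition hedge (n : nat) := ('I_n.+1 * bool)%type.
Definition alpha n (h : hedge n) : hedge n := (h.1, ~~ h.2).
Lemma alphaK n : cancel (@alpha n) (@alpha n).
Proof. by case=> j b; rewrite /alpha /= negbK. Qed.
Definition alphaP n : {perm hedge n} := perm (can_inj (@alphaK n)).
Definition root n : hedge n := (ord0, false).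

(* face permutation phi h = sigma (alpha h)  (mathcomp: (a * s) x = s (a x)) *)
Definition facep n (s : {perm hedge n}) : {perm hedge n} := alphaP n * s.

Definition nverts n (s : {perm hedge n}) : nat := #|porbits s|.
Definition nfaces n (s : {perm hedge n}) : nat := #|porbits (facep s)|.
Definition rootvdeg n (s : {perm hedge n}) : nat := #|porbit s (root n)|.
Definition rootfdeg n (s : {perm hedge n}) : nat := #|porbit (facep s) (root n)|.

(* connected (the group <sigma, alpha> is transitive) and planar (genus 0) *)
Definition connectedb n (s : {perm hedge n}) : bool :=
  [forall h, connect [rel a b | (b == s a) || (b == alpha a)] (root n) h].
Definition planarb n (s : {perm hedge n}) : bool :=
  connectedb s && (nverts s + nfaces s == n.+1 + 2)%N.
Definition planar_sigmas n : {set {perm hedge n}} := [set s | planarb s].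

(* root-preserving relabelings compatible with alpha; rooted planar maps  *)
(* with n.+1 edges = orbits of planar_sigmas under conjugation by these.  *)
Definition relabel n : {set {perm hedge n}} :=
  [set t : {perm hedge n} | [forall h, t (alpha h) == alpha (t h)] && (t (root n) == root n)].
Definition rooted_maps n : {set {set {perm hedge n}}} :=
  [set (s ^: relabel n)%g | s in planar_sigmas n].

(* Potts polynomial of the underlying graph (vertices = sigma-cycles,     *)
(* edge j joins the vertices of (j,false),(j,true)).                      *)
Definition colsum n (s : {perm hedge n}) (k : nat) : PQ :=
  \sum_(c : {ffun hedge n -> 'I_k} | [forall h, c (s h) == c h])
     'X ^+ #|[set j : 'I_n.+1 | c (j, false) == c (j, true)]|.
(* P_M(q,nu) regarded as a polynomial in q, nu: the element of Q[q][nu]   *)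
(* (written here with outer variable nu) whose specialisation at every    *)
(* positive integer q = k is the colouring sum.                           *)
Definition potts n (s : {perm hedge n}) : PN :=
  epsilon (inhabits 0) (fun P : PN =>
    forall k : nat, (0 < k)%N -> map_poly (fun a : PQ => a.[k%:R]) P = colsum s k).

(* Coefficient of t^e in M(q,nu,t,w,z;x,y): a polynomial in x (outer)  *)
(* and y (inner) over F.                                                *)
Definition map_weight n (z : F) (s : {perm hedge n}) : {poly {poly F}} :=
  ((qF^-1 * embQN (potts s) * wF ^+ (nverts s).-1 * z ^+ (nfaces s).-1)
      *: ('X ^+ rootfdeg s))%:P * 'X ^+ rootvdeg s.
Definition Mcoef (z : F) (e : nat) : {poly {poly F}} :=
  match e with
  | 0 => (qF^-1 * qF)%:P%:P   (* atomic map: v = f = 1, degrees 0, P = q *)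
  | n.+1 => \sum_(C in rooted_maps n) map_weight z (repr C)
  end.
(* coefficients of M(x,1) (poly in x) and of M(1,y) (poly in y), z = 1 *)
Definition Mx1coef (e : nat) : {poly F} := map_poly (fun p : {poly F} => p.[1]) (Mcoef 1 e).
Definition M1ycoef (e : nat) : {poly F} := (Mcoef 1 e).[1%:P].

Definition series := nat -> F.
Definition sconst (c : F) : series := fun n => if n == 0%N then c else 0.
Definition st : series := fun n => if n == 1%N then 1 else 0.
Definition sadd (a b : series) : series := fun n => a n + b n.
Definition ssub (a b : series) : series := fun n => a n - b n.
Definition smul (a b : series) : series :=
  fun n => \sum_(i < n.+1) a i * b (n - i)%N.
Definition spow (a : series) (k : nat) : series := iter k (smul a) (sconst 1).
Definition seval (p : {poly F}) (Y : series) : series :=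
  fun n => \sum_(i < size p) p`_i * spow Y i n.
Definition scomp (G : nat -> {poly F}) (Y : series) : series :=
  fun n => \sum_(e < n.+1) seval (G e) Y (n - e)%N.

Definition Xs : series := sadd (sconst 1) (smul st (sconst sF)).

(* (x-1)(y-1) K(x,y) at x = 1+ts, y = Y  (denominators cleared) *)
Definition Kcleared (Y : series) : series :=
  let x := Xs in
  let xm1 := ssub x (sconst 1) in
  let ym1 := ssub Y (sconst 1) in
  let c := sconst in
  let m := smul in
  ssub (ssub (ssub (ssub (m xm1 ym1)
     (m (m (m (m x x) Y) (m (c wF) st)) (m (c (nuF - 1)) ym1)))
     (m (m (m x (m Y Y)) st) xm1))
     (m (m xm1 ym1) (m (m (m (m x Y) st) (ssub (m x (c nuF)) (c 1))) (scomp Mx1coef x))))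
     (m (m xm1 ym1)
        (m (m (m (m x Y) (c wF)) st)
           (m (sadd (m (c (nuF - 1)) ym1) (m (c qF) Y)) (scomp M1ycoef Y)))).

(* Y solves K(1+ts, Y) = 0 in the fraction field of F[[t]]:  Y <> 1 and  *)
(* the denominator-cleared equation holds (F[[t]] is a domain, x-1 <> 0). *)
Definition Ksol (Y : series) : Prop :=
  (exists n, Y n != sconst 1 n) /\ (forall n, Kcleared Y n = 0).

(* Main.v *)
Require Import Defs.
From HB Require Import structures.
From mathcomp Require Import all_boot all_order all_fingroup all_algebra.
Import GRing.Theory.
From Stdlib Require Import Lia.
Ltac sn := repeat match goal with H : is_true (leq _ _) |- _ => move/leP: H => H end;
  apply/leP; rewrite -?minusE -?plusE -?multE; lia.
Set Implicit Arguments. Unset Strict Implicit. Unset Printing Implicit Defensive.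
Local Open Scope ring_scope.

Ltac simpR := rewrite ?(mul0r, mulr0, add0r, addr0, mul1r, mulr1, subr0, sub0r, subrr, oppr0).

Section Gen.
Variable R : fieldType.
Definition gser := nat -> R.
Definition gsconst (c : R) : gser := fun n => if n == 0%N then c else 0.
Definition gst : gser := fun n => if n == 1%N then 1 else 0.
Definition gsadd (a b : gser) : gser := fun n => a n + b n.
Definition gssub (a b : gser) : gser := fun n => a n - b n.
Definition gsmul (a b : gser) : gser :=
  fun n => \sum_(i < n.+1) a i * b (n - i)%N.
Definition gspow (a : gser) (k : nat) : gser := iter k (gsmul a) (gsconst 1).
Definition gseval (p : {poly R}) (Y : gser) : gser :=
  fun n => \sum_(i < size p) p`_i * gspow Y i n.
Definition gscomp (G : nat -> {poly R}) (Y : gser) : gser :=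
  fun n => \sum_(e < n.+1) gseval (G e) Y (n - e)%N.
Variables (s w nu q : R) (M1 M2 : nat -> {poly R}).
Definition gXs : gser := gsadd (gsconst 1) (gsmul gst (gsconst s)).
Definition gK (Y : gser) : gser :=
  let x := gXs in
  let xm1 := gssub x (gsconst 1) in
  let ym1 := gssub Y (gsconst 1) in
  let c := gsconst in
  let m := gsmul in
  gssub (gssub (gssub (gssub (m xm1 ym1)
     (m (m (m (m x x) Y) (m (c w) gst)) (m (c (nu - 1)) ym1)))
     (m (m (m x (m Y Y)) gst) xm1))
     (m (m xm1 ym1) (m (m (m (m x Y) gst) (gssub (m x (c nu)) (c 1))) (gscomp M1 x))))
     (m (m xm1 ym1)
        (m (m (m (m x Y) (c w)) gst)
           (m (gsadd (m (c (nu - 1)) ym1) (m (c q) Y)) (gscomp M2 Y)))).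


Lemma smul0 a b : gsmul a b 0 = a 0%N * b 0%N.
Proof. by rewrite /gsmul big_ord1. Qed.

Lemma smulS a b n : gsmul a b n.+1 = a 0%N * b n.+1 + \sum_(i < n.+1) a i.+1 * b (n - i)%N.
Proof. by rewrite /gsmul big_ord_recl /=. Qed.

Lemma smul_split a b n : gsmul a b n.+1 =
  a 0%N * b n.+1 + \sum_(i < n) a i.+1 * b (n - i)%N + a n.+1 * b 0%N.
Proof. by rewrite smulS big_ord_recr /= subnn addrA. Qed.

Lemma smul1 a b : gsmul a b 1 = a 0%N * b 1%N + a 1%N * b 0%N.
Proof. by rewrite smul_split big_ord0 addr0. Qed.

Lemma smul_split2 a b n : gsmul a b n.+2 =
  a 0%N * b n.+2 + a 1%N * b n.+1 + \sum_(i < n) a i.+2 * b (n - i)%N + a n.+2 * b 0%N.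
Proof. by rewrite smul_split big_ord_recl /= !addrA. Qed.

Lemma smulC a b n : gsmul a b n = gsmul b a n.
Proof.
rewrite /gsmul (reindex_inj rev_ord_inj) /=; apply: eq_bigr => i _.
by rewrite subSS subKn 1?mulrC // -ltnS.
Qed.

Lemma alg1 (a b c e f k l D : R) :
  a * (b + l * D) + c + (e + k * D) * f = (a * b + c + e * f) + (k * f + a * l) * D.
Proof.
rewrite mulrDr mulrDl [(k * f + _) * _]mulrDl mulrA (mulrAC k D f).
rewrite -!addrA; congr (_ + _); rewrite addrCA; congr (_ + _).
rewrite addrCA; congr (_ + _); exact: addrC.
Qed.

Definition J (d : R) (m : nat) (u u' : gser) (k : R) :=
  (forall i, (i < m)%N -> u i = u' i) /\ u m = u' m + k * d.
Definition Pe d m u u' := exists k, J d m u u' k.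

Section JJ.
Variable d : R.

Lemma J_ext m u v u' v' k : (forall i, u i = v i) -> (forall i, u' i = v' i) ->
  J d m u u' k -> J d m v v' k.
Proof. by move=> e e' [H1 H2]; split=> [i /H1|]; rewrite -e -e'. Qed.

Lemma J_const m a : J d m a a 0.
Proof. by split=> //; rewrite mul0r addr0. Qed.

Lemma J_add m u u' v v' k l : J d m u u' k -> J d m v v' l ->
  J d m (gsadd u v) (gsadd u' v') (k + l).
Proof.
move=> [H1 H2] [G1 G2]; split=> [i im|]; first by rewrite /gsadd H1 ?G1.
by rewrite /gsadd H2 G2 mulrDl addrACA.
Qed.

Lemma J_sub m u u' v v' k l : J d m u u' k -> J d m v v' l ->
  J d m (gssub u v) (gssub u' v') (k - l).
Proof.
move=> [H1 H2] [G1 G2]; split=> [i im|]; first by rewrite /gssub H1 ?G1.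
by rewrite /gssub H2 G2 mulrBl opprD addrACA.
Qed.

Lemma J_scale m c u u' k : J d m u u' k ->
  J d m (fun i => c * u i) (fun i => c * u' i) (c * k).
Proof.
move=> [H1 H2]; split=> [i im|]; first by rewrite H1.
by rewrite H2 mulrDr mulrA.
Qed.

Lemma J_mul m u u' v v' k l : (0 < m)%N -> J d m u u' k -> J d m v v' l ->
  J d m (gsmul u v) (gsmul u' v') (k * v' 0%N + u' 0%N * l).
Proof.
case: m => // m _ [H1 H2] [G1 G2]; split.
  move=> i im; rewrite /gsmul; apply: eq_bigr => j _; have hj := ltn_ord j.
  by rewrite H1 ?G1 //; sn.
rewrite !smul_split H2 G2 H1 // G1 //.
have -> : \sum_(i < m) u i.+1 * v (m - i)%N = \sum_(i < m) u' i.+1 * v' (m - i)%N.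
  apply: eq_bigr => i _; have hi := ltn_ord i.
  by rewrite H1 ?G1 //; sn.
exact: alg1.
Qed.

Lemma J_mulS m u u' v v' k l : (0 < m)%N -> J d m.+1 u u' k -> u' 0%N = 0 -> J d m v v' l ->
  J d m.+1 (gsmul u v) (gsmul u' v') (k * v' 0%N + u' 1%N * l).
Proof.
case: m => // m _ [H1 H2] u0 [G1 G2].
have u0' : u 0%N = 0 by rewrite H1.
split.
  case=> [_|i im]; first by rewrite !smul0 u0 u0' !mul0r.
  rewrite !smulS u0 u0' !mul0r !add0r; apply: eq_bigr => j _; have hj := ltn_ord j.
  by rewrite H1 ?G1 //; sn.
rewrite !smul_split2 u0 u0' !mul0r !add0r H2 G2 H1 // G1 //.
have -> : \sum_(i < m) u i.+2 * v (m - i)%N = \sum_(i < m) u' i.+2 * v' (m - i)%N.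
  apply: eq_bigr => i _; have hi := ltn_ord i.
  by rewrite H1 ?G1 //; sn.
exact: alg1.
Qed.

Lemma J_Smul m u u' v v' k l : (0 < m)%N -> J d m v v' l -> J d m.+1 u u' k -> u' 0%N = 0 ->
  J d m.+1 (gsmul v u) (gsmul v' u') (k * v' 0%N + u' 1%N * l).
Proof.
move=> m0 Hv Hu u0; apply: (J_ext _ _ (J_mulS m0 Hu u0 Hv)) => i; exact: smulC.
Qed.

Lemma J_mul00 m u u' v v' k l : J d m.+1 u u' k -> u' 0%N = 0 -> J d m.+1 v v' l -> v' 0%N = 0 ->
  J d m.+1 (gsmul u v) (gsmul u' v') 0.
Proof.
move=> [H1 H2] u0 [G1 G2] v0.
have u0' : u 0%N = 0 by rewrite H1.
have v0' : v 0%N = 0 by rewrite G1.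
split.
  case=> [_|i im]; first by rewrite !smul0 u0 u0' !mul0r.
  rewrite !smulS u0 u0' !mul0r !add0r; apply: eq_bigr => j _; have hj := ltn_ord j.
  by rewrite H1 ?G1 //; sn.
rewrite !smul_split u0 u0' v0 v0' !mul0r !mulr0 !add0r !addr0.
apply: eq_bigr => i _; have hi := ltn_ord i.
  by rewrite H1 ?G1 //; sn.
Qed.

Lemma J_weak m u u' k : J d m.+1 u u' k -> J d m u u' 0.
Proof.
move=> [H1 _]; split=> [i im|]; first by rewrite H1 // ltnW.
by rewrite H1 // mul0r addr0.
Qed.

Lemma Pe_J m u u' k : J d m u u' k -> Pe d m u u'.
Proof. by exists k. Qed.

Lemma Pe_mul m u u' v v' : (0 < m)%N -> Pe d m u u' -> Pe d m v v' -> Pe d m (gsmul u v) (gsmul u' v').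
Proof. by move=> m0 [k Hu] [l Hv]; apply: Pe_J (J_mul m0 Hu Hv). Qed.

Lemma Pe_mulS m u u' v v' : (0 < m)%N -> Pe d m.+1 u u' -> u' 0%N = 0 -> Pe d m v v' ->
  Pe d m.+1 (gsmul u v) (gsmul u' v').
Proof. by move=> m0 [k Hu] u0 [l Hv]; apply: Pe_J (J_mulS m0 Hu u0 Hv). Qed.

Lemma Pe_Smul m u u' v v' : (0 < m)%N -> Pe d m v v' -> Pe d m.+1 u u' -> u' 0%N = 0 ->
  Pe d m.+1 (gsmul v u) (gsmul v' u').
Proof. by move=> m0 [l Hv] [k Hu] u0; apply: Pe_J (J_Smul m0 Hv Hu u0). Qed.

Lemma Pe_add m u u' v v' : Pe d m u u' -> Pe d m v v' -> Pe d m (gsadd u v) (gsadd u' v').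
Proof. by move=> [k Hu] [l Hv]; apply: Pe_J (J_add Hu Hv). Qed.

Lemma J_mul00P m u u' v v' : Pe d m.+1 u u' -> u' 0%N = 0 -> Pe d m.+1 v v' -> v' 0%N = 0 ->
  J d m.+1 (gsmul u v) (gsmul u' v') 0.
Proof. by move=> [k Hu] u0 [l Hv] v0; apply: J_mul00 Hu u0 Hv v0. Qed.

Lemma Pe_spow m Y Y' k : (0 < m)%N -> J d m Y Y' k -> forall j, Pe d m (gspow Y j) (gspow Y' j).
Proof.
move=> m0 HY; elim=> [|j IH]; first by exists 0; exact: J_const.
exact: (Pe_mul m0 (Pe_J HY) IH).
Qed.

Lemma Pe_sum m N (c : nat -> R) (f f' : nat -> gser) : (forall j, Pe d m (f j) (f' j)) ->
  Pe d m (fun i => \sum_(j < N) c j * f j i) (fun i => \sum_(j < N) c j * f' j i).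
Proof.
move=> Hf; elim: N => [|N [k IH]].
  by exists 0; apply: (J_ext _ _ (J_const m (fun _ => 0))) => i; rewrite big_ord0.
have [l Hl] := Hf N.
exists (k + c N * l); apply: (J_ext _ _ (J_add IH (J_scale (c N) Hl))) => i;
  by rewrite /gsadd big_ord_recr.
Qed.

Lemma Pe_seval m Y Y' k p : (0 < m)%N -> J d m Y Y' k -> Pe d m (gseval p Y) (gseval p Y').
Proof.
move=> m0 HY; have := @Pe_sum m (size p) (fun j => p`_j) _ _ (Pe_spow m0 HY); exact.
Qed.

Lemma Pe_scomp m Y Y' k G : (0 < m)%N -> J d m Y Y' k -> Pe d m (gscomp G Y) (gscomp G Y').
Proof.
move=> m0 HY; have H e := Pe_seval (G e) m0 HY.
have [k0 [H01 H02]] := H 0%N.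
exists k0; split.
  move=> i im; rewrite /gscomp; apply: eq_bigr => e _.
  have [ke [He _]] := H e; apply: He; apply: leq_ltn_trans im; exact: leq_subr.
case: m m0 HY H H01 H02 => // m _ HY H H01 H02.
rewrite /gscomp big_ord_recl [in RHS]big_ord_recl /= subn0 H02 addrAC; congr (_ + _).
congr (_ + _); apply: eq_bigr => e _; have [ke [He _]] := H (lift ord0 e); apply: He.
have he := ltn_ord e; rewrite /= /bump /=; sn.
Qed.
End JJ.

Lemma smul0l a b : a 0%N = 0 -> gsmul a b 0 = 0.
Proof. by move=> h; rewrite smul0 h mul0r. Qed.
Lemma smul0r a b : b 0%N = 0 -> gsmul a b 0 = 0.
Proof. by move=> h; rewrite smul0 h mulr0. Qed.
Lemma sconst0 c : gsconst c 0 = c. Proof. by []. Qed.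
Lemma sconstS c n : gsconst c n.+1 = 0. Proof. by []. Qed.
Lemma st0 : gst 0 = 0. Proof. by []. Qed.
Lemma st1 : gst 1 = 1. Proof. by []. Qed.
Lemma stS n : gst n.+2 = 0. Proof. by []. Qed.
Lemma Xs0 : gXs 0 = 1.
Proof. by rewrite /gXs /gsadd smul0 st0 sconst0 mul0r addr0. Qed.
Lemma Xs1 : gXs 1 = s.
Proof. by rewrite /gXs /gsadd smul1 st0 st1 sconst0 !sconstS mul0r mul1r !add0r. Qed.
Lemma xm10 : gssub gXs (gsconst 1) 0 = 0.
Proof. by rewrite /gssub Xs0 sconst0 subrr. Qed.
Lemma xm11 : gssub gXs (gsconst 1) 1 = s.
Proof. by rewrite /gssub Xs1 sconstS subr0. Qed.

Definition Dv (y : R) := s - (w * (nu - 1) * (y - 1) + w * (nu - 1) * y).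

Lemma key n Y Y' : (0 < n)%N -> (forall i, (i < n)%N -> Y i = Y' i) ->
  gK Y n.+1 = gK Y' n.+1 + Dv (Y' 0%N) * (Y n - Y' n).
Proof.
move=> n0 Hl; set d := Y n - Y' n.
have hY : J d n Y Y' 1 by split=> //; rewrite mul1r addrC subrK.
have hX := J_const d n gXs.
have hxm1 := J_const d n.+1 (gssub gXs (gsconst 1)).
have hym1 := J_sub hY (J_const d n (gsconst 1)).
have hT1 := J_mulS n0 hxm1 xm10 hym1.
have hA := J_mul n0 (J_mul n0 hX hX) hY.
have B0 : gsmul (gsconst w) gst 0 = 0 by apply: smul0r.
have hu := J_Smul n0 hA (J_const d n.+1 (gsmul (gsconst w) gst)) B0.
have hV := J_mul n0 (J_const d n (gsconst (nu - 1))) hym1.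
have hT2 := J_mulS n0 hu (smul0r _ B0) hV.
have hR3 := J_Smul n0 (J_mul n0 hX (J_mul n0 hY hY)) (J_const d n.+1 gst) st0.
have hT3 := J_mul00 hR3 (smul0r _ st0) hxm1 xm10.
have P0 := smul0l (gssub Y' (gsconst 1)) xm10.
have hR4 := J_Smul n0 (J_mul n0 hX hY) (J_const d n.+1 gst) st0.
have hQa := Pe_mulS n0 (Pe_J hR4) (smul0r _ st0)
   (Pe_J (J_const d n (gssub (gsmul gXs (gsconst nu)) (gsconst 1)))).
have hQ4 := Pe_mulS n0 hQa (smul0l _ (smul0r _ st0)) (Pe_J (J_const d n (gscomp M1 gXs))).
have hT4 := J_mul00P (Pe_J hT1) P0 hQ4 (smul0l _ (smul0l _ (smul0r _ st0))).
have hR5 := J_Smul n0 (J_mul n0 (J_mul n0 hX hY) (J_const d n (gsconst w))) (J_const d n.+1 gst) st0.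
have hS := Pe_mul n0 (Pe_add (Pe_J (J_mul n0 (J_const d n (gsconst (nu - 1))) hym1))
     (Pe_J (J_mul n0 (J_const d n (gsconst q)) hY))) (Pe_scomp M2 n0 hY).
have hQ5 := Pe_mulS n0 (Pe_J hR5) (smul0r _ st0) hS.
have hT5 := J_mul00P (Pe_J hT1) P0 hQ5 (smul0l _ (smul0r _ st0)).
have := J_sub (J_sub (J_sub (J_sub hT1 hT2) hT3) hT4) hT5.
case=> _ HK; apply: (etrans HK); congr (_ + _ * _).
rewrite xm11 !smul0 !smul1 Xs0 Xs1 st0 st1 !sconst0 !sconstS /gssub !sconst0.
rewrite !mul0r !mulr0 !add0r !addr0 !mul1r !mulr1 !subr0.
rewrite !smul0 Xs0 !sconst0 st0 !mul0r !mulr0 !add0r !addr0 !mul1r !mulr1.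
by rewrite /Dv mulrA [Y' 0%N * w]mulrC [w * Y' 0%N * _]mulrAC.
Qed.

Lemma smul2 a b : gsmul a b 2 = a 0%N * b 2%N + a 1%N * b 1%N + a 2%N * b 0%N.
Proof. by rewrite smul_split2 big_ord0 addr0. Qed.
Lemma Xs2 : gXs 2 = 0.
Proof. by rewrite /gXs /gsadd smul2 st0 st1 stS !sconstS !sconst0; simpR. Qed.

Lemma K0 Y : gK Y 0 = 0.
Proof.
by rewrite /gK /gssub !smul0 st0 Xs0 !sconst0; simpR.
Qed.

Lemma K1 Y : gK Y 1 = (Y 0%N - 1) * (s - w * (nu - 1) * Y 0%N).
Proof.
rewrite /gK /gssub !smul1 !smul0 st0 st1 Xs0 Xs1 !sconst0 !sconstS; simpR.
rewrite [RHS]mulrBr [(_ - 1) * s]mulrC; congr (_ - _).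
rewrite mulrA [RHS]mulrC; congr (_ * _).
by rewrite [Y 0%N * w]mulrC mulrAC.
Qed.

Lemma K2c : gK (gsconst 1) 2 = - s.
Proof.
rewrite /gK /gssub !smul2 !smul1 !smul0 st0 st1 stS Xs0 Xs1 Xs2 !sconst0 !sconstS; simpR.
done.
Qed.

Fixpoint approx (c0 : R) (k : nat) : gser :=
  match k with
  | 0 => gsconst c0
  | k'.+1 => fun i => if i == k'.+1 then - gK (approx c0 k') k'.+2 / Dv c0 else approx c0 k' i
  end.
Definition Ysol c0 : gser := fun i => approx c0 i i.

Lemma approx_hi c0 k i : (k < i)%N -> approx c0 k i = 0.
Proof.
elim: k i => [|k IH] i hi /=; first by case: i hi.
have -> : (i == k.+1) = false by apply/negbTE; rewrite neq_ltn hi orbT.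
by apply: IH; apply: ltnW.
Qed.

Lemma approx_lo c0 k i : (i <= k)%N -> approx c0 k i = Ysol c0 i.
Proof.
elim: k i => [|k IH] i hi; first by case: i hi.
rewrite /=; case: eqP => [->|ne]; first by rewrite /Ysol /= eqxx.
apply: IH; rewrite leq_eqVlt in hi; case/orP: hi => [/eqP //|]; by rewrite ltnS.
Qed.

Lemma Ysol0 c0 : Ysol c0 0 = c0.
Proof. by []. Qed.

Lemma Ysol_sol c0 : gK (gsconst c0) 1 = 0 -> Dv c0 != 0 -> forall n, gK (Ysol c0) n = 0.
Proof.
move=> root D0; case=> [|[|k]]; first exact: K0.
  by rewrite K1 Ysol0 -[c0]/(gsconst c0 0%N) -K1.
rewrite (@key k.+1 (Ysol c0) (approx c0 k)) //; last first.
  by move=> i hi; rewrite approx_lo.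
rewrite approx_lo // Ysol0 approx_hi // subr0 /Ysol /= eqxx.
by rewrite mulrC divfK // addrN.
Qed.

Lemma Ysol_uniq Y c0 : (forall n, gK Y n = 0) -> Y 0%N = c0 -> Dv c0 != 0 ->
  (forall n, gK (Ysol c0) n = 0) -> forall n, Y n = Ysol c0 n.
Proof.
move=> HY Y0 D0 HS.
suff H : forall n i, (i <= n)%N -> Y i = Ysol c0 i by move=> n; apply: (H n).
elim=> [|n IH] i hi; first by case: i hi.
rewrite leq_eqVlt in hi; case/orP: hi => [/eqP ->|]; last by rewrite ltnS; apply: IH.
have := @key n.+1 Y (Ysol c0) isT (fun i hi => IH i hi).
rewrite !HY HS Ysol0 add0r => /esym/eqP; rewrite mulf_eq0 (negbTE D0) /= subr_eq0.
by move/eqP.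
Qed.

Definition gKsol Y := (exists n, Y n != gsconst 1 n) /\ (forall n, gK Y n = 0).

Theorem gen (Hs : s != 0) (Ha : w * (nu - 1) != 0) (Hsa : s - w * (nu - 1) != 0) :
  exists Y1 Y2 : gser, [/\ (exists n, Y1 n != Y2 n), gKsol Y1, gKsol Y2,
   (forall Y, gKsol Y -> (forall n, Y n = Y1 n) \/ (forall n, Y n = Y2 n)) &
   [/\ Y1 0%N = 1, Y2 0%N = s / (w * (nu - 1)), Y1 1%N = s / (w - w * nu + s) & Y1 1%N != 0]].
Proof.
pose a := w * (nu - 1); pose c2 := s / a.
have Ha' : a != 0 := Ha.
have Hsa' : s - a != 0 := Hsa.
have ac2 : a * c2 = s by rewrite mulrC divfK.
have D1 : Dv 1 = s - a by rewrite /Dv -/a subrr mulr0 add0r mulr1.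
have D1n : Dv 1 != 0 by rewrite D1.
have D2 : Dv c2 = a - s.
  by rewrite /Dv -/a mulrBr mulr1 ac2 opprD addrCA subrr addr0 opprB.
have D2n : Dv c2 != 0 by rewrite D2 -oppr_eq0 opprB.
have root1 : gK (gsconst 1) 1 = 0 by rewrite K1 sconst0 subrr mul0r.
have rootc2 : gK (gsconst c2) 1 = 0 by rewrite K1 sconst0 -/a ac2 subrr mulr0.
have hS1 := Ysol_sol root1 D1n.
have hS2 := Ysol_sol rootc2 D2n.
have c2n1 : c2 != 1.
  apply/eqP => h; move: Hsa'; rewrite -{1}ac2 h mulr1; move/negP; apply; apply/eqP; exact: subrr.
have eqD : s - a = w - w * nu + s by rewrite /a mulrBr mulr1 opprB addrC.
have Y11 : Ysol 1 1 = s / (s - a) by rewrite /Ysol /= ?eqxx K2c opprK D1.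
have Y1n0 : Ysol 1 1 != 0 by rewrite Y11 mulf_neq0 // invr_neq0.
exists (Ysol 1), (Ysol c2); split.
- by exists 0%N; rewrite !Ysol0 eq_sym.
- by split=> //; exists 1%N; rewrite sconstS.
- by split=> //; exists 0%N; rewrite Ysol0 sconst0.
- move=> Y [_ HY]; have := K1 Y; rewrite HY => /esym/eqP; rewrite mulf_eq0 -/a.
  case/orP=> [h|h].
    left; apply: Ysol_uniq => //; by apply/eqP; rewrite -subr_eq0.
  right; apply: Ysol_uniq => //.
  move: h; rewrite subr_eq0 => /eqP h.
  by rewrite /c2 h mulrC mulKf.
- by split=> //; rewrite Y11 eqD.
Qed.
End Gen.


Lemma t1 : (tofrac (1:PS) : F) = 1.
Proof. exact: tofrac1. Qed.
Definition aF : F := wF * (nuF - 1).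
Definition Np : PS := ((('X : PN)%:P : PW)%:P : PS).
Definition Wp : PS := (('X : PW)%:P : PS).
Lemma aF_def : aF = tofrac (Wp * (Np - 1)).
Proof. by rewrite /aF -t1 -tofracB -tofracM. Qed.
Lemma Np1 : Np - 1 = ((('X - 1%:P : PN)%:P : PW)%:P : PS).
Proof. by rewrite /Np !polyCB !polyC1. Qed.
Lemma aF_neq0 : aF != 0.
Proof.
rewrite aF_def tofrac_eq0 mulf_eq0 negb_or Np1 /Wp !polyC_eq0 polyX_eq0 /=.
exact/negbT/polyXsubC_eq0.
Qed.
Lemma sF_neq0 : sF != 0.
Proof. by rewrite /sF tofrac_eq0 polyX_eq0. Qed.
Lemma saF_neq0 : sF - aF != 0.
Proof.
rewrite aF_def /sF -tofracB tofrac_eq0 /Wp Np1 -polyCM.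
exact/negbT/polyXsubC_eq0.
Qed.

Theorem lemma6p1 :
  exists Y1 Y2 : series,
    [/\ (exists n, Y1 n != Y2 n),
        Ksol Y1, Ksol Y2,
        (forall Y : series, Ksol Y -> (forall n, Y n = Y1 n) \/ (forall n, Y n = Y2 n)) &
        [/\ Y1 0%N = 1,
            Y2 0%N = sF / (wF * (nuF - 1)),
            Y1 1%N = sF / (wF - wF * nuF + sF) &
            Y1 1%N != 0]].
Proof.
have := @gen F sF wF nuF qF Mx1coef M1ycoef sF_neq0 aF_neq0 saF_neq0.
exact.
Qed.
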